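(* Let $N\ge1$ and $L=\sum_{i=0}^N a_i(x)\partial_x^i$ with $a_i(x)=\sum_{j=0}^i a_{i,j}x^j$ complex polynomials, $a_0\equiv0$, $a_i\equiv0$ for $i>N$, and let $\delta_n^{(k)}=\sum_{i=k}^n\binom ni i!\,a_{i,i-k}$ ($0\le k\le n$). Suppose there are $\lambda_n\in\mathbb{C}$ ($n\ge0$, $\lambda_0=0$, $\lambda_n\notin\{0,\lambda_1,\ldots,\lambda_{n-1}\}$ for $n\ge1$) and monic polynomials $P_n(x)=\sum_{i=0}^nb_{n,i}x^i$ of degree $n$ with $\sum_{i=1}^Na_i\partial_x^iP_n=\lambda_nP_n$ for all $n\ge0$ (convention $b_{m,m}=1$, $b_{m,l}=0$ for $l>m$). Then for every $n\ge1$ and $k=1,\ldots,n$, $(-1)^k\delta_n^{(k)}$ equals the determinant of the $k\times k$ matrix $G$ with first row $G_{1,c}=(\lambda_{n-k}-\lambda_{n-k+c})\,b_{n-k+c,\,n-k}$ ($1\le c\le k$) and, for rows $2\le\rho\le k$, $G_{\rho,c}=b_{n-k+c,\;n-k+\rho-1}$.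
   Context: $\partial_x^i$ denotes the $i$-th derivative in $x$. With the stated convention, rows $2,\ldots,k$ of $G$ have ones on the subdiagonal and zeros below it. *)

(* Defs.v *)
From HB Require Import structures.
From mathcomp Require Import all_boot all_order all_algebra.
From mathcomp Require Import reals complex.
Set Implicit Arguments. Unset Strict Implicit. Unset Printing Implicit Defensive.
Import Order.TTheory GRing.Theory Num.Theory.
Local Open Scope ring_scope.

Definition coef_poly (R : realType) (a : nat -> nat -> R[i]) (i : nat) : {poly R[i]} :=
  \sum_(j < i.+1) (a i j)%:P * 'X^j.

Definition Lop (R : realType) (N : nat) (a : nat -> nat -> R[i]) (p : {poly R[i]}) : {poly R[i]} :=
  \sum_(1 <= i < N.+1) coef_poly a i * p^`(i).

Definition delta (R : realType) (a : nat -> nat -> R[i]) (n k : nat) : R[i] :=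
  \sum_(k <= i < n.+1) ('C(n, i) * i`!)%:R * a i (i - k)%N.

(* the k x k matrix G (0-indexed rows r and columns c; paper's rho = r+1, c_paper = c+1) *)
Definition Gmat (R : realType) (lambda : nat -> R[i]) (b : nat -> nat -> R[i]) (n k : nat)
  : 'M[R[i]]_k :=
  \matrix_(r < k, c < k)
    if r == 0 :> nat
    then (lambda (n - k)%N - lambda (n - k + c.+1)%N) * b (n - k + c.+1)%N (n - k)%N
    else b (n - k + c.+1)%N (n - k + r)%N.

(* Main.v *)
Require Import Defs.
From HB Require Import structures.
From mathcomp Require Import all_boot all_order all_algebra.
From mathcomp Require Import reals complex.
From mathcomp Require Import zify ring.
Import Order.TTheory GRing.Theory Num.Theory.
Local Open Scope ring_scope.

Lemma cpE (R : realType) (a : nat -> nat -> R[i]) i j :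
  (Defs.coef_poly a i)`_j = if (j < i.+1)%N then a i j else 0.
Proof.
have -> : Defs.coef_poly a i = \poly_(j < i.+1) a i j.
  by rewrite poly_def /Defs.coef_poly; apply: eq_bigr => k _; rewrite mul_polyC.
by rewrite poly.coef_poly.
Qed.

Lemma LopXn (R : realType) (N : nat) (a : nat -> nat -> R[i])
  (a0 : forall j, a 0%N j = 0) (aN : forall i j, (N < i)%N -> a i j = 0) m l :
  (Lop N a 'X^m)`_l = if (l <= m)%N then delta a m (m - l) else 0.
Proof.
rewrite /Lop coef_sum.
under eq_bigr => i _ do rewrite derivnXn mulrnAr coefMn coefMXn cpE.
case: leqP => Hlm; last first.
  rewrite big1 // => i _.
  case: (leqP i m) => Him; last by rewrite ffact_small.
  have -> : (l < m - i)%N = false by lia.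
  have -> : (l - (m - i) < i.+1)%N = false by lia. 
by rewrite mul0rn.
set g := fun i => (if (m - l <= i)%N then a i (i - (m - l))%N else 0) *+ m ^_ i.
transitivity (\sum_(1 <= i < N.+1) g i).
  apply: eq_bigr => i _; rewrite /g.
  case: (leqP i m) => Him; last by rewrite ffact_small.
  case: (ltnP l (m - i)) => H1.
    by have -> : (m - l <= i)%N = false by lia.
  have -> : (m - l <= i)%N = true by lia.
  have -> : (l - (m - i) < i.+1)%N = true by lia.
  by have -> : (l - (m - i) = i - (m - l))%N by lia.
have E1 : \sum_(0 <= i < N + m + 1) g i = \sum_(1 <= i < N.+1) g i.
  rewrite (@big_cat_nat _ _ _ N.+1) //=; last by lia.
  rewrite [X in _ + X]big_nat_cond [X in _ + X]big1 ?addr0; last first.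
    by move=> i /andP[/andP[Hi _] _]; rewrite /g aN ?if_same ?mul0rn //; lia.
  by rewrite big_ltn // /g a0 if_same mul0rn add0r.
have E2 : \sum_(0 <= i < N + m + 1) g i = delta a m (m - l).
  rewrite (@big_cat_nat _ _ _ (m - l)) //=; last by lia.
  rewrite [X in X + _]big_nat_cond [X in X + _]big1 ?add0r; last first.
    move=> i /andP[/andP[_ Hi] _]; rewrite /g; have -> : (m - l <= i)%N = false by lia.
    by rewrite mul0rn.
  rewrite (@big_cat_nat _ _ _ m.+1) //=; try lia.
  rewrite [X in _ + X]big_nat_cond [X in _ + X]big1 ?addr0; last first.
    by move=> i /andP[/andP[Hi _] _]; rewrite /g ffact_small.
  rewrite /delta big_nat_cond [RHS]big_nat_cond; apply: eq_bigr => i /andP[/andP[Hi _] _].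
  by rewrite /g Hi mulr_natl bin_ffact.
by rewrite -E1 E2.
Qed.
Lemma polyM (R : realType) (p : {poly R[i]}) M : (size p <= M)%N ->
  p = \sum_(m < M) p`_m *: 'X^m.
Proof.
move=> Hs; rewrite -poly_def; apply/polyP => j; rewrite poly.coef_poly.
by case: ltnP => // H; rewrite nth_default //; apply: leq_trans H.
Qed.

Lemma Lop_coef (R : realType) (N : nat) (a : nat -> nat -> R[i])
  (a0 : forall j, a 0%N j = 0) (aN : forall i j, (N < i)%N -> a i j = 0) (p : {poly R[i]}) M l :
  (size p <= M)%N ->
  (Lop N a p)`_l = \sum_(m < M) p`_m * (if (l <= m)%N then delta a m (m - l) else 0).
Proof.
move=> Hs; rewrite [in LHS](@polyM R p M Hs).
have -> : Lop N a (\sum_(m < M) p`_m *: 'X^m) = \sum_(m < M) p`_m *: Lop N a 'X^m.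
  rewrite /Lop.
  under eq_bigr => i _ do rewrite raddf_sum mulr_sumr.
  rewrite exchange_big /=; apply: eq_bigr => m _.
  rewrite scaler_sumr; apply: eq_bigr => i _.
  by rewrite derivnZ scalerAr.
rewrite coef_sum; apply: eq_bigr => m _.
by rewrite coefZ LopXn.
Qed.

Theorem lemma2 (R : realType) (N : nat) (a : nat -> nat -> R[i])
    (lambda : nat -> R[i]) (P : nat -> {poly R[i]}) :
  (1 <= N)%N ->
  (forall j, a 0%N j = 0) ->
  (forall i j, (N < i)%N -> a i j = 0) ->
  lambda 0%N = 0 ->
  (forall n, (1 <= n)%N -> lambda n != 0 /\ (forall m, (m < n)%N -> lambda n != lambda m)) ->
  (forall n, P n \is monic /\ size (P n) = n.+1) ->
  (forall n, Lop N a (P n) = lambda n *: P n) ->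
  forall n k, (1 <= n)%N -> (1 <= k <= n)%N ->
    (-1) ^+ k * delta a n k = \det (Gmat lambda (fun m l => (P m)`_l) n k).
Proof.
move=> _ a0 aN _ _ HP HL n k _ Hk.
have bz q l : (q < l)%N -> (P q)`_l = 0.
  by move=> H; rewrite nth_default // (proj2 (HP q)).
have b1 q : (P q)`_q = 1.
  by case: (HP q) => /monicP; rewrite lead_coefE => H Hs; rewrite Hs /= in H.
have Eig q l M : (q < M)%N -> lambda q * (P q)`_l =
   \sum_(m < M) (P q)`_m * (if (l <= m)%N then delta a m (m - l) else 0).
  move=> HM; rewrite -(@Lop_coef R N a a0 aN); last by rewrite (proj2 (HP q)).
  by rewrite HL coefZ.
have lamE q : lambda q = delta a q 0.
  have := Eig q q q.+1 (ltnSn q); rewrite b1 mulr1 => ->.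
  rewrite big_ord_recr /= b1 leqnn subnn mul1r big1 ?add0r // => i _.
  by rewrite ifN ?mulr0 // -ltnNge.
case: k Hk => [//|k] /andP[_ Hkn].
set p0 := (n - k.+1)%N.
have Hn : n = (p0 + k.+1)%N by rewrite /p0; lia.
set G := Gmat lambda (fun m l => (P m)`_l) n k.+1.
set d := fun r : 'I_k.+1 => if r == 0 :> nat then 0 else - delta a (p0 + r) r.
have StepA : forall j : 'I_k.+1, G 0 j =
   \sum_(r < k.+1) d r * G r j - (j == ord_max)%:R * delta a n k.+1.
  move=> j.
  set q := (p0 + j.+1)%N.
  have Hq : (q < n.+1)%N by rewrite /q Hn; have := ltn_ord j; lia.
  have bn : (P q)`_n = (j == ord_max)%:R.
    case: eqP => [Hj|Hj].
      by have -> : q = n by rewrite /q Hj /=; lia.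
    rewrite bz //; rewrite /q Hn ltn_add2l; have := ltn_ord j.
    have Hj' : (j != k :> nat) by apply/eqP => H; apply: Hj; apply: val_inj.
    move=> H; lia.
  have G0 : G 0 j = (lambda p0 - lambda q) * (P q)`_p0 by rewrite mxE.
  have Gr : forall r : 'I_k, G (lift ord0 r) j = (P q)`_(p0 + r.+1) by move=> r; rewrite mxE.
  have E := Eig q p0 n.+1 Hq.
  rewrite -(big_mkord xpredT (fun m => (P q)`_m * (if (p0 <= m)%N then delta a m (m - p0) else 0))) in E.
  rewrite (@big_cat_nat _ _ _ p0) //= in E; last by lia.
  rewrite big_nat_cond big1 ?add0r in E; last first.
    by move=> i /andP[/andP[_ Hi] _]; rewrite leqNgt Hi mulr0.
  rewrite (@big_addn _ _ _ 0 n.+1 p0) in E.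
  rewrite (_ : (n.+1 - p0 = k.+2)%N) in E; last by lia.
  rewrite big_mkord big_ord_recr big_ord_recl /= in E.
  rewrite big_ord_recl G0 /d /= mul0r add0r.
  rewrite !add0n leqnn subnn -lamE leq_addl addnK (addnC k.+1) -Hn bn in E.
  rewrite (eq_bigr (fun i : 'I_k => (P q)`_(p0 + i.+1) * delta a (p0 + i.+1) i.+1)) in E; last first.
    by move=> i _; rewrite /bump leq0n add1n leq_addl addnK (addnC i.+1).
  under [X in _ = X - _]eq_bigr => i _ do rewrite Gr /bump leq0n add1n mulNr mulrC.
  rewrite sumrN mulrBl E.
  ring.
have StepB : \det G = - delta a n k.+1 * cofactor G 0 ord_max.
  rewrite (expand_det_row G 0).
  under eq_bigr do rewrite StepA mulrBl big_distrl /=.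
  rewrite sumrB exchange_big /= big1; last first.
    move=> r _.
    have -> : \sum_j d r * G r j * cofactor G 0 j = d r * (G *m \adj G) r 0.
      rewrite mxE mulr_sumr; apply: eq_bigr => j _.
      by rewrite -mulrA; congr (_ * (_ * _)); rewrite /adjugate mxE.
    rewrite mul_mx_adj mxE /d.
    by case: (r =P 0) => [->|/eqP Hr]; rewrite ?eqxx ?mul0r ?mulr0n ?mulr0.
  rewrite (bigD1 ord_max) //= eqxx mul1r big1 ?addr0 ?sub0r ?mulNr //.
  by move=> j /negPf ->; rewrite mul0r mul0r.
have StepC : \det (row' 0 (col' ord_max G)) = 1.
  rewrite -det_tr det_trig; last first.
    apply/is_trig_mxP => i j Hij.
    rewrite !mxE lift_max /= /bump leq0n add1n /=.
    by rewrite -/p0 bz // ltn_add2l ltnS.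
  rewrite big1 // => i _.
  by rewrite !mxE lift_max /= /bump leq0n add1n /= -/p0 b1.
by rewrite StepB /cofactor StepC add0n exprS; ring.
Qed.
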